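(* Let $\sigma$ be a rank-one ruled submanifold. Then for every $t\in I$ the degree of the ruling distribution of $\sigma$ at $t$ is at most $1$. In particular, a noncylindrical rank-one submanifold is of degree one.
   Context: Ruled submanifold: given an open interval $I$, a smooth unit-speed curve $\gamma\colon I\to\mathbb{R}^{m+n}$ and smooth vector fields $X_{1},\dotsc,X_{m-1}$ along $\gamma$ that are orthonormal at each $t$, define $\sigma(t,u^{1},\dotsc,u^{m-1})=\gamma(t)+\sum_{j=1}^{m-1}u^{j}X_{j}(t)$ on $I\times\mathbb{R}^{m-1}$. A point is regular if $d\sigma$ is injective there. The ruling distribution is $\mathcal{D}_{t}=\operatorname{Span}(X_{j}(t))_{j=1}^{m-1}$. Define $\rho_{t}\colon\mathcal{D}_{t}\to\mathcal{D}_{t}^{\perp}$ by $\sum_{j}c_{j}X_{j}(t)\mapsto\sum_{j}c_{j}\pi^{\perp}\dot X_{j}(t)$, where $\pi^{\perp}$ is orthogonal projection onto $\mathcal{D}_{t}^{\perp}$. The degree of $\mathcal{D}$ at $t$ is $\operatorname{rank}\rho_{t}$. The submanifold $\sigma$ is noncylindrical if the degree is nonzero for every $t$, and of degree one if it equals $1$ for every $t$. A ruled submanifold is rank-one if at every regular point the kernel of its second fundamental form has dimension $m-1$. *)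

(* Defs.v *)
From HB Require Import structures.
From mathcomp Require Import all_boot all_order all_algebra.
From mathcomp Require Import all_classical all_reals all_analysis.
Set Implicit Arguments. Unset Strict Implicit. Unset Printing Implicit Defensive.
Import Order.TTheory GRing.Theory Num.Theory.
Import numFieldNormedType.Exports.
Local Open Scope classical_set_scope.
Local Open Scope ring_scope.

Section RuledDefs.
Variable R : realType.

(* Euclidean inner product on row vectors (the library norm on matrices is the max norm). *)
Definition dotv N (u v : 'rV[R]_N) : R := (u *m v^T) 0 0.

Definition smooth_on N (I : set R) (f : R -> 'rV[R]_N) :=
  forall (j : nat) (t : R), I t -> derivable (derive1n j f) t 1.

Definition unit_speed_on N (I : set R) (g : R -> 'rV[R]_N) :=
  forall t, I t -> dotv (derive1 g t) (derive1 g t) = 1.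

Definition orthonormal_on k N (I : set R) (X : 'I_k -> R -> 'rV[R]_N) :=
  forall t, I t -> forall i j, dotv (X i t) (X j t) = (i == j)%:R.

(* v minus its orthogonal projection onto the row space of A (A with independent rows):
   i.e. the orthogonal projection of v onto the orthogonal complement of rowspace A. *)
Definition perp_proj p N (A : 'M[R]_(p, N)) (v : 'rV[R]_N) : 'rV[R]_N :=
  v - v *m A^T *m invmx (A *m A^T) *m A.

(* Matrix whose rows are X_1(t),...,X_k(t) : basis of the ruling space D_t. *)
Definition ruling_mx k N (X : 'I_k -> R -> 'rV[R]_N) (t : R) : 'M[R]_(k, N) :=
  \matrix_(j < k) X j t.

(* Matrix of rho_t in the basis (X_j(t)) : row j is pi^perp (dX_j/dt)(t). *)
Definition rho_mx k N (X : 'I_k -> R -> 'rV[R]_N) (t : R) : 'M[R]_(k, N) :=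
  \matrix_(j < k) perp_proj (ruling_mx X t) (derive1 (X j) t).

Definition ruling_degree k N (X : 'I_k -> R -> 'rV[R]_N) (t : R) : nat :=
  \rank (rho_mx X t).

(* The ruled map sigma, with coordinates p = (t, u^1, ..., u^k) in R^(k+1),
   p 0 0 = t and p 0 (lift ord0 j) = u^(j+1). *)
Definition ruled_map k N (g : R -> 'rV[R]_N) (X : 'I_k -> R -> 'rV[R]_N)
    (p : 'rV[R]_(k.+1)) : 'rV[R]_N :=
  g (p 0 0) + \sum_(j < k) p 0 (lift ord0 j) *: X j (p 0 0).

Definition coord_vec m (a : 'I_m) : 'rV[R]_m := delta_mx 0 a.

Definition jacobian m N (s : 'rV[R]_m -> 'rV[R]_N) (p : 'rV[R]_m) : 'M[R]_(m, N) :=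
  \matrix_(a < m) 'D_(coord_vec a) s p.

Definition regular_point m N (s : 'rV[R]_m -> 'rV[R]_N) (p : 'rV[R]_m) : bool :=
  row_free (jacobian s p).

(* h_{ab} = normal component of d^2 sigma / dx^a dx^b : the coefficients of the
   second fundamental form in the coordinate basis of the tangent space. *)
Definition sff_coef m N (s : 'rV[R]_m -> 'rV[R]_N) (p : 'rV[R]_m) (a b : 'I_m)
  : 'rV[R]_N :=
  perp_proj (jacobian s p) ('D_(coord_vec b) ('D_(coord_vec a) s) p).

(* Matrix of the linear map c |-> II(sum_a c_a d_a sigma, .) = (sum_a c_a h_{ab})_b,
   its row a being (h_{ab})_b flattened. Its kernel is the kernel of the second
   fundamental form (expressed in the coordinate basis of the tangent space). *)
Definition sff_mx m N (s : 'rV[R]_m -> 'rV[R]_N) (p : 'rV[R]_m) : 'M[R]_(m, m * N) :=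
  \matrix_(a < m) mxvec (\matrix_(b < m) sff_coef s p a b).

Definition sff_kernel_dim m N (s : 'rV[R]_m -> 'rV[R]_N) (p : 'rV[R]_m) : nat :=
  \rank (kermx (sff_mx s p)).

Definition rank_one k N (I : set R) (g : R -> 'rV[R]_N) (X : 'I_k -> R -> 'rV[R]_N) :=
  forall p : 'rV[R]_(k.+1), I (p 0 0) -> regular_point (ruled_map g X) p ->
    sff_kernel_dim (ruled_map g X) p = k.

Definition noncylindrical k N (I : set R) (X : 'I_k -> R -> 'rV[R]_N) :=
  forall t, I t -> ruling_degree X t <> 0%N.

Definition degree_one k N (I : set R) (X : 'I_k -> R -> 'rV[R]_N) :=
  forall t, I t -> ruling_degree X t = 1%N.

End RuledDefs.

(* Main.v *)
Require Import Defs.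
From HB Require Import structures.
From mathcomp Require Import all_boot all_order all_algebra.
From mathcomp Require Import all_classical all_reals all_analysis.
From mathcomp Require Import ring lra zify.
From Stdlib Require Import Lia.
Set Implicit Arguments. Unset Strict Implicit. Unset Printing Implicit Defensive.
Import Order.TTheory GRing.Theory Num.Theory.
Import numFieldNormedType.Exports.
Local Open Scope classical_set_scope.
Local Open Scope ring_scope.
Section Aux.
Variable R : realType.

Lemma Dline (V W : normedModType R) (f : V -> W) p v :
  'D_v f p = 'D_1 (fun h : R => f (h *: v + p)) 0.
Proof.
have E : (fun h : R => h^-1 *: ((f \o shift p) (h *: v) - f p)) =
  (fun h : R => h^-1 *: (((fun h : R => f (h *: v + p)) \o shift 0) (h *: 1) - f (0 *: v + p))).
  by apply/funext => h; rewrite /= addr0 scale0r add0r [_%:A]mulr1.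
by rewrite /derive E.
Qed.

Lemma Dshift (W : normedModType R) (f : R -> W) t :
  'D_1 (fun h : R => f (h + t)) 0 = 'D_1 f t.
Proof.
have E : (fun h : R => h^-1 *: (((fun h : R => f (h + t)) \o shift 0) (h *: 1) - f (0 + t))) =
  (fun h : R => h^-1 *: ((f \o shift t) (h *: 1) - f t)).
  by apply/funext => h; rewrite /= addr0 add0r.
by rewrite /derive E.
Qed.

Lemma Daffine (W : normedModType R) (phi : R -> W) c w :
  (forall h, phi h = c + h *: w) -> 'D_1 phi 0 = w.
Proof.
move=> E; have -> : phi = cst c + ( *:%R ^~ w) by apply/funext => h; rewrite E.
rewrite deriveD; last 2 first.
- exact: derivable_cst.
- exact/diff_derivable.
by rewrite derive_cst add0r deriveE // diff_val scale1r.
Qed.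

End Aux.
Section Ruled.
Variable R : realType.
Variables (k N : nat) (g : R -> 'rV[R]_N) (X : 'I_k -> R -> 'rV[R]_N).
Local Notation sigma := (ruled_map g X).
Local Notation e := (coord_vec R).

Lemma coordE m (a b : 'I_m) : e a 0 b = (a == b)%:R.
Proof. by rewrite /coord_vec mxE eqxx /= eq_sym. Qed.

Lemma lineE m (a b : 'I_m) h (p : 'rV[R]_m) :
  (h *: e a + p) 0 b = h * (a == b)%:R + p 0 b.
Proof. by rewrite !mxE eqxx /= eq_sym. Qed.

Lemma D_sigma_u (j : 'I_k) (q : 'rV[R]_k.+1) : 'D_(e (lift ord0 j)) sigma q = X j (q 0 0).
Proof.
rewrite Dline; apply: (Daffine (c := sigma q)) => h.
rewrite /ruled_map lineE.
have -> : (lift ord0 j == ord0) = false by [].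
rewrite mulr0 add0r -addrA; congr (_ + _).
under eq_bigr => i _ do rewrite lineE (inj_eq lift_inj) scalerDl.
rewrite big_split /= addrC; congr (_ + _).
rewrite (bigD1 j) //= eqxx mulr1 big1 ?addr0 // => i /negbTE.
by rewrite eq_sym => ->; rewrite mulr0 scale0r.
Qed.


Lemma D_sigma_t (q : 'rV[R]_k.+1) : derivable g (q 0 0) 1 -> (forall i, derivable (X i) (q 0 0) 1) ->
  'D_(e ord0) sigma q = 'D_1 g (q 0 0) + \sum_(i < k) q 0 (lift ord0 i) *: 'D_1 (X i) (q 0 0).
Proof.
move=> dg dX.
pose psi := g + \sum_(i < k) (q 0 (lift ord0 i) \*: X i).
have E : (fun h : R => sigma (h *: e ord0 + q)) = (fun h => psi (h + q 0 0)).
  apply/funext => h; rewrite /ruled_map /psi lineE eqxx mulr1 fct_sumE /=.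
  transitivity (g (h + q 0 0) + \sum_(i < k) q 0 (lift ord0 i) *: X i (h + q 0 0)); last by [].
  congr (_ + _); apply: eq_bigr => i _.
  by rewrite lineE /= mulr0 add0r.
have dS : forall i : 'I_k, derivable (q 0 (lift ord0 i) \*: X i) (q 0 0) 1.
  by move=> i; apply: derivableZ.
rewrite Dline E Dshift /psi.
have := deriveD dg (derivable_sum dS). 
move=> ->; congr (_ + _).
have := derive_sum dS; move=> ->; apply: eq_bigr => i _.
exact: (deriveZ (q 0 (lift ord0 i)) (dX i)).
Qed.


Lemma DXt (j : 'I_k) (p : 'rV[R]_k.+1) :
  'D_(e ord0) (fun q : 'rV[R]_k.+1 => X j (q 0 0)) p = 'D_1 (X j) (p 0 0).
Proof.
rewrite Dline -(Dshift (X j)).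
have -> : (fun h : R => X j ((h *: e ord0 + p) 0 0)) = (fun h => X j (h + p 0 0)) by
  apply/funext => h; rewrite lineE eqxx mulr1.
by [].
Qed.

Lemma DXu (i j : 'I_k) (p : 'rV[R]_k.+1) :
  'D_(e (lift ord0 i)) (fun q : 'rV[R]_k.+1 => X j (q 0 0)) p = 0.
Proof.
rewrite Dline; apply: (Daffine (c := X j (p 0 0))) => h.
by rewrite lineE /= mulr0 add0r scaler0 addr0.
Qed.

Lemma D2ut (j : 'I_k) (p : 'rV[R]_k.+1) :
  'D_(e ord0) ('D_(e (lift ord0 j)) sigma) p = 'D_1 (X j) (p 0 0).
Proof.
have -> : 'D_(e (lift ord0 j)) sigma = (fun q : 'rV[R]_k.+1 => X j (q 0 0)).
  by apply/funext => q; rewrite D_sigma_u.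
exact: DXt.
Qed.

Lemma D2uu (i j : 'I_k) (p : 'rV[R]_k.+1) :
  'D_(e (lift ord0 i)) ('D_(e (lift ord0 j)) sigma) p = 0.
Proof.
have -> : 'D_(e (lift ord0 j)) sigma = (fun q : 'rV[R]_k.+1 => X j (q 0 0)).
  by apply/funext => q; rewrite D_sigma_u.
exact: DXu.
Qed.

Lemma D2tu (j : 'I_k) (p : 'rV[R]_k.+1) :
  derivable g (p 0 0) 1 -> (forall i, derivable (X i) (p 0 0) 1) ->
  'D_(e (lift ord0 j)) ('D_(e ord0) sigma) p = 'D_1 (X j) (p 0 0).
Proof.
move=> dg dX; rewrite Dline; apply: (Daffine (c := 'D_(e ord0) sigma p)) => h.
have E0 : (h *: e (lift ord0 j) + p) 0 0 = p 0 0.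
  by rewrite lineE /= mulr0 add0r.
rewrite D_sigma_t E0 // D_sigma_t // -addrA; congr (_ + _).
under eq_bigr => i _ do rewrite lineE (inj_eq lift_inj) scalerDl.
rewrite big_split /= addrC; congr (_ + _).
rewrite (bigD1 j) //= eqxx mulr1 big1 ?addr0 ?scalerA // => i /negbTE.
by rewrite eq_sym => ->; rewrite mulr0 scale0r.
Qed.

End Ruled.
Section LinAlg.
Variable R : realType.

Lemma rank_mxsub m n m' n' (f : 'I_m' -> 'I_m) (g : 'I_n' -> 'I_n) (M : 'M[R]_(m, n)) :
  (\rank (mxsub f g M) <= \rank M)%N.
Proof.
have -> : mxsub f g M = mxsub f id 1%:M *m M *m mxsub id g 1%:M.
  by rewrite mul_rowsub_mx mul1mx mulmx_colsub mulmx1; apply/matrixP => i j; rewrite !mxE.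
exact: leq_trans (mxrankM_maxl _ _) (mxrankM_maxr _ _).
Qed.

Lemma rank2 m n (M : 'M[R]_(m, n)) r1 r2 c1 c2 x :
  x != 0 -> M r1 c2 = x -> M r2 c1 = x -> M r2 c2 = 0 -> (2 <= \rank M)%N.
Proof.
move=> x0 E12 E21 E22.
pose f := fun i : 'I_2 => if i == 0 then r1 else r2.
pose h := fun j : 'I_2 => if j == 0 then c1 else c2.
apply: leq_trans (rank_mxsub f h M).
set S := mxsub f h M.
have -> : S = \matrix_(i < 2, j < 2) (if i == 0 then (if j == 0 then M r1 c1 else x)
                                       else (if j == 0 then x else 0)).
  apply/matrixP => i j; rewrite !mxE /f /h.
  by case: (i == 0); case: (j == 0).
set a := M r1 c1.
rewrite mxrank_unit // -row_free_unit; apply/row_freeP.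
exists (\matrix_(i < 2, j < 2) (if i == 0 then (if j == 0 then 0 else x^-1)
                                       else (if j == 0 then x^-1 else - a / x ^+ 2))).
apply/matrixP => i j; rewrite !mxE !big_ord_recl big_ord0 !mxE /=.
case: i => [[|[|//]] ?]; case: j => [[|[|//]] ?] /=; field; exact: x0.
Qed.

End LinAlg.
Section LinAlg2.
Variable R : realType.
Variables (k N : nat) (A : 'M[R]_(k, N)).
Hypothesis orthA : A *m A^T = 1%:M.
Let Pi : 'M[R]_N := 1%:M - A^T *m A.

Lemma Pi_tr : Pi^T = Pi.
Proof. by rewrite /Pi raddfB /= trmx1 trmx_mul trmxK. Qed.

Lemma A_Pi : A *m Pi = 0.
Proof. by rewrite /Pi mulmxBr mulmx1 mulmxA orthA mul1mx subrr. Qed.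

Lemma Pi_Pi : Pi *m Pi = Pi.
Proof.
by rewrite {1}/Pi mulmxBl mul1mx -mulmxA A_Pi mulmx0 subr0.
Qed.

Lemma self_dot0 (u : 'rV[R]_N) : (u *m u^T) 0 0 = 0 -> u = 0.
Proof.
rewrite mxE => /eqP; rewrite psumr_eq0 => [/allP H|i _].
  apply/matrixP => i j; rewrite [i]ord1 mxE.
  have := H j (mem_index_enum _); rewrite mxE -expr2 sqrf_eq0 => /eqP ->.
  by [].
by rewrite mxE -expr2 sqr_ge0.
Qed.

Lemma row_free_colmx (w : 'rV[R]_N) : w *m Pi != 0 -> row_free (col_mx w A).
Proof.
move=> q0; set q := w *m Pi.
set s := (q *m q^T) 0 0.
have s0 : s != 0 by apply/eqP => /self_dot0 /eqP; rewrite (negbTE q0).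
have qT : q^T = Pi *m w^T by rewrite trmx_mul Pi_tr.
have wq : w *m q^T = s%:M.
  rewrite /s -(mx11_scalar (q *m q^T)).
  by rewrite qT /q !mulmxA -(mulmxA w Pi Pi) Pi_Pi.
have Aq : A *m q^T = 0 by rewrite qT mulmxA A_Pi mul0mx.
apply/row_freeP.
exists (row_mx (s^-1 *: q^T) (A^T - s^-1 *: (q^T *m (w *m A^T)))).
rewrite mul_col_mx !mul_mx_row -!scalemxAr !mulmxBr -!scalemxAr !mulmxA wq Aq orthA.
rewrite !mul0mx !scaler0 subr0 mul_scalar_mx -scalemxAl scalerA mulVf // scale1r subrr.
by rewrite scale_scalar_mx mulVf // (scalar_mx_block 1 k).
Qed.

End LinAlg2.
Section Main.
Variable R : realType.
Variables (k N : nat) (I : set R) (g : R -> 'rV[R]_N) (X : 'I_k -> R -> 'rV[R]_N).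
Local Notation sigma := (ruled_map g X).
Local Notation e := (coord_vec R).

Lemma deg_le1 t : I t -> derivable g t 1 -> (forall i, derivable (X i) t 1) ->
  orthonormal_on I X -> rank_one I g X -> (ruling_degree X t <= 1)%N.
Proof.
move=> It dg dX orth hro.
set A := ruling_mx X t.
have orthA : A *m A^T = 1%:M.
  apply/matrixP => i j; rewrite !mxE -(orth t It i j) /dotv mxE.
  by apply: eq_bigr => l _; rewrite !mxE.
set Pi := 1%:M - A^T *m A.
set Dm := \matrix_(j < k) derive1 (X j) t.
have rhoE : rho_mx X t = Dm *m Pi.
  apply/row_matrixP => j.
  by rewrite rowK row_mul rowK /perp_proj orthA invmx1 mulmx1 mulmxBr mulmx1 mulmxA.
rewrite /ruling_degree rhoE.
case: (eqVneq (Dm *m Pi) 0) => [->|rho0]; first by rewrite mxrank0.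
have [j rj] : exists j, row j (Dm *m Pi) != 0.
  case: (pselect (exists j, row j (Dm *m Pi) != 0)) => // H.
  exfalso; move/negP: rho0; apply; apply/eqP/row_matrixP => j; rewrite row0.
  by apply/eqP/negPn/negP => Hj; apply: H; exists j.
set gp := 'D_1 g t.
have xE : forall i, derive1 (X i) t = 'D_1 (X i) t by move=> i; rewrite derive1E.
set xj := 'D_1 (X j) t.
have [c qc] : exists c : R, (gp + c *: xj) *m Pi != 0.
  move: rj; rewrite row_mul rowK xE -/xj => rj.
  case: (eqVneq (gp *m Pi) 0) => h; [exists 1 | exists 0].
    by rewrite scale1r mulmxDl h add0r.
  by rewrite scale0r addr0.
set p : 'rV[R]_k.+1 := t *: e ord0 + c *: e (lift ord0 j).
have p0 : p 0 0 = t by rewrite !mxE /= mulr1 mulr0 addr0.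
have pl : forall i, p 0 (lift ord0 i) = c * (j == i)%:R.
  by move=> i; rewrite !mxE /= (inj_eq lift_inj) eq_sym mulr0 add0r.
have dgp : derivable g (p 0 0) 1 by rewrite p0.
have dXp : forall i, derivable (X i) (p 0 0) 1 by rewrite p0.
have w_eq : 'D_(e ord0) sigma p = gp + c *: xj.
  rewrite D_sigma_t // p0; congr (_ + _).
  rewrite (bigD1 j) //= pl eqxx mulr1 big1 ?addr0 // => i /negbTE ji.
  by rewrite pl eq_sym ji mulr0 scale0r.
set J := Defs.jacobian sigma p.
have Jeq : J = col_mx (gp + c *: xj) A.
  apply/row_matrixP => i; rewrite rowK.
  case: (unliftP ord0 i) => [i' ->|->].
    rewrite D_sigma_u p0.
    have -> : lift ord0 i' = @rshift 1 k i' by apply: val_inj.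
    by rewrite (rowKd i' (gp + c *: xj) A) rowK.
  rewrite w_eq.
  have -> : ord0 = @lshift 1 k 0 by apply: val_inj.
  rewrite (rowKu (0 : 'I_1) (gp + c *: xj) A).
  by apply/rowP => b; rewrite !mxE.
have reg : regular_point sigma p by rewrite /regular_point -/J Jeq; exact: row_free_colmx.
have kd := hro p (eq_ind_r I It p0) reg.
have P0 : forall i, perp_proj J ('D_1 (X i) t) = 0.
  move=> i; apply/eqP/negPn/negP => Hi.
  have [a Ha] : exists a, perp_proj J ('D_1 (X i) t) 0 a != 0.
    case: (pselect (exists a, perp_proj J ('D_1 (X i) t) 0 a != 0)) => // H.
    exfalso; apply: (negP Hi); apply/eqP/rowP => a; rewrite [RHS]mxE.
    by apply/eqP/negPn/negP => Ha; apply: H; exists a.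
  have r2 : (2 <= \rank (sff_mx sigma p))%N.
    apply: (rank2 (r1 := ord0) (r2 := lift ord0 i) (c1 := mxvec_index ord0 a)
      (c2 := mxvec_index (lift ord0 i) a) Ha).
    - rewrite mxE mxvecE mxE /sff_coef.
      by have := @D2tu R k N g X i p dgp dXp; move=> ->; rewrite p0.
    - rewrite mxE mxvecE mxE /sff_coef.
      by have := @D2ut R k N g X i p; move=> ->; rewrite p0.
    - rewrite mxE mxvecE mxE /sff_coef D2uu /perp_proj !mul0mx subr0.
      by rewrite mxE.
  move: kd; rewrite /sff_kernel_dim mxrank_ker.
  have : (0 < k)%N by apply: (leq_ltn_trans _ (ltn_ord i)).
  have := rank_leq_row (sff_mx sigma p).
  move: r2; set r := \rank _.
  lia.
set M := invmx (J *m J^T).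
have DmE : Dm = Dm *m J^T *m M *m J.
  apply/row_matrixP => i; rewrite !row_mul rowK xE.
  by apply/eqP; rewrite -subr_eq0; apply/eqP; exact: (P0 i).
have JPi : J *m Pi = col_mx (1%:M : 'M[R]_1) (0 : 'M[R]_(k, 1)) *m ((gp + c *: xj) *m Pi).
  have APi : A *m Pi = 0 := A_Pi orthA.
  rewrite Jeq mul_col_mx mul1mx mul0mx.
  by have := mul_col_mx (gp + c *: xj) A Pi; move=> ->; rewrite APi.
have -> : Dm *m Pi = (Dm *m J^T *m M *m col_mx (1%:M : 'M[R]_1) (0 : 'M[R]_(k, 1)))
    *m ((gp + c *: xj) *m Pi).
  by rewrite {1}DmE -mulmxA JPi !mulmxA.
exact: leq_trans (mxrankM_maxl _ _) (rank_leq_col _).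
Qed.

End Main.

Theorem mainTheorem6 (R : realType) (k n : nat) (I : set R)
    (gamma : R -> 'rV[R]_(k.+1 + n)) (X : 'I_k -> R -> 'rV[R]_(k.+1 + n)) :
  open I -> is_interval I ->
  smooth_on I gamma -> (forall j, smooth_on I (X j)) ->
  unit_speed_on I gamma -> orthonormal_on I X ->
  rank_one I gamma X ->
  (forall t, I t -> (ruling_degree X t <= 1)%N) /\
  (noncylindrical I X -> degree_one I X).
Proof.
move=> _ _ hg hX _ orth hro.
have H1 : forall t, I t -> (ruling_degree X t <= 1)%N.
  move=> t It; apply: (@deg_le1 R k _ I gamma X t It) => //.
  - exact: (hg 0%N t It : derivable gamma t 1).
  - by move=> i; exact: (hX i 0%N t It : derivable (X i) t 1).
split => // nc t It.
have := H1 t It; have := nc t It; lia.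
Qed.
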